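(* Let $\mathcal{Q}=(Q,\leq^Q)$ and $\mathcal{P}=(P,\leq^P)$ be finite posets, $w=\mathrm{width}(\mathcal{P})$, $(C_1,\dots,C_w)$ a chain partition of $\mathcal{P}$, and $f:Q\to\{1,\dots,w\}$. Let $I$ be the CSP instance with domain $P$, one variable $x_q$ for every $q\in Q$ (ranging over $C_{f(q)}$), and, for every pair of distinct $q,q'\in Q$, a constraint $c_{q,q'}$ with scope $(x_q,x_{q'})$ whose relation consists of all pairs $(p,p')$ with $p\in C_{f(q)}$, $p'\in C_{f(q')}$ such that ($p\leq^P p'$ iff $q\leq^Q q'$) and ($p'\leq^P p$ iff $q'\leq^Q q$). Then $I$ is closed under every min polymorphism that is compatible with $\leq^P$, i.e., under the binary operation $\min_{\preceq}$ for any linear order $\preceq$ on $P$ that agrees with $\leq^P$ on each chain $C_i$.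
   Context: A chain partition $(C_1,\dots,C_w)$ of $\mathcal{P}$ is a partition of $P$ into chains (sets of pairwise comparable elements). A CSP instance consists of variables, a finite domain $D$, and constraints each given by a scope (ordered tuple of variables) and a relation on $D$ of matching arity. A $k$-ary relation $R$ is closed under a function $\varphi:D^2\to D$ if for any two tuples $t_1,t_2\in R$ the tuple $(\varphi(t_1[1],t_2[1]),\dots,\varphi(t_1[k],t_2[k]))$ is in $R$; an instance is closed under $\varphi$ if all its constraint relations are. A min polymorphism is a function $\varphi(d,d')=\min\{d,d'\}$ with respect to some linear order of $D$. *)

(* Defs.v *)
From HB Require Import structures.
From mathcomp Require Import all_boot all_order.
From Stdlib Require List.
Set Implicit Arguments. Unset Strict Implicit. Unset Printing Implicit Defensive.
Import Order.Theory.
Open Scope order_scope.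

Definition is_chain d (P : finPOrderType d) (A : {set P}) : bool :=
  [forall x in A, forall y in A, (x <= y) || (y <= x)].

Definition is_antichain d (P : finPOrderType d) (A : {set P}) : bool :=
  [forall x in A, forall y in A, (x <= y) ==> (x == y)].

Definition width d (P : finPOrderType d) : nat :=
  (\max_(A : {set P} | is_antichain A) #|A|)%N.

Definition chain_partition d (P : finPOrderType d) (w : nat)
    (C : 'I_w -> {set P}) : Prop :=
  [/\ forall i, C i != set0,
      forall i, is_chain (C i),
      forall p : P, exists i, p \in C i &
      forall i j (p : P), p \in C i -> p \in C j -> i = j].

Record constraint (V D : Type) := Constraint {
  c_arity : nat;
  c_scope : c_arity.-tuple V;
  c_rel : pred (c_arity.-tuple D) }.

Definition csp_instance (V D : Type) := seq (constraint V D).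

Definition rel_closed_under (D : Type) (k : nat) (phi : D -> D -> D)
    (R : pred (k.-tuple D)) : Prop :=
  forall t1 t2 : k.-tuple D, R t1 -> R t2 ->
    R [tuple phi (tnth t1 i) (tnth t2 i) | i < k].

Definition instance_closed_under (V D : Type) (phi : D -> D -> D)
    (I : csp_instance V D) : Prop :=
  forall c, List.In c I -> rel_closed_under phi (@c_rel V D c).

Definition min_wrt (D : Type) (lin : rel D) (x y : D) : D :=
  if lin x y then x else y.

Definition linear_order (D : Type) (lin : rel D) : Prop :=
  [/\ reflexive lin, antisymmetric lin, transitive lin & total lin].

Definition compatible_lin d (P : finPOrderType d) (w : nat)
    (C : 'I_w -> {set P}) (lin : rel P) : Prop :=
  forall i (p p' : P), p \in C i -> p' \in C i -> lin p p' = (p <= p').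

(* unary constraint: x_q ranges over C_{f(q)} *)
Definition dom_constraint dQ dP (Q : finPOrderType dQ) (P : finPOrderType dP)
    (w : nat) (C : 'I_w -> {set P}) (f : Q -> 'I_w) (q : Q) : constraint Q P :=
  @Constraint Q P 1 [tuple q] (fun t => tnth t ord0 \in C (f q)).

Definition pair_constraint dQ dP (Q : finPOrderType dQ) (P : finPOrderType dP)
    (w : nat) (C : 'I_w -> {set P}) (f : Q -> 'I_w) (q q' : Q) : constraint Q P :=
  @Constraint Q P 2 [tuple q; q']
    (fun t => let p := tnth t ord0 in let p' := tnth t (lift ord0 ord0) in
       [&& p \in C (f q), p' \in C (f q'),
           (p <= p') == (q <= q') & (p' <= p) == (q' <= q)]).

Definition lemma_instance dQ dP (Q : finPOrderType dQ) (P : finPOrderType dP)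
    (w : nat) (C : 'I_w -> {set P}) (f : Q -> 'I_w) : csp_instance Q P :=
  [seq dom_constraint C f q | q <- enum Q] ++
  [seq pair_constraint C f qq.1 qq.2 | qq <- enum [pred qq : Q * Q | qq.1 != qq.2]].

(* Main.v *)
Require Import Defs.
From mathcomp Require Import all_boot all_order.
Set Implicit Arguments. Unset Strict Implicit. Unset Printing Implicit Defensive.
Import Order.Theory.
Open Scope order_scope.

Lemma In_cat (T : Type) (c : T) s1 s2 :
  List.In c (s1 ++ s2) -> List.In c s1 \/ List.In c s2.
Proof.
elim: s1 => [|x s IH] /=; first by right.
by case=> [->|/IH [H|H]]; [left; left| left; right | right].
Qed.

Lemma In_map (A B : Type) (g : A -> B) (c : B) s :
  List.In c (map g s) -> exists x, c = g x.
Proof.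
elim: s => [|x s IH] //= [<-|/IH //]; by exists x.
Qed.

Lemma min_props d (P : finPOrderType d) w (C : 'I_w -> {set P}) lin i a b :
  linear_order lin -> compatible_lin C lin -> a \in C i -> b \in C i ->
  (min_wrt lin a b = a /\ a <= b) \/ (min_wrt lin a b = b /\ b <= a).
Proof.
case=> _ _ _ tot comp Ha Hb; rewrite /min_wrt.
case E: (lin a b); first by left; rewrite -(comp i) .
right; split => //; rewrite -(comp i) //.
by move: (tot a b); rewrite E.
Qed.

Lemma key dQ d (Q : finPOrderType dQ) (P : finPOrderType d) (q q' : Q)
  (a a' b b' : P) :
  (a <= a') = (q <= q') -> (a' <= a) = (q' <= q) ->
  (b <= b') = (q <= q') -> (b' <= b) = (q' <= q) ->
  a <= b -> b' <= a' ->
  (a <= b') = (q <= q') /\ (b' <= a) = (q' <= q).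
Proof.
move=> h1 h2 h3 h4 ab ba; split.
- case E: (q <= q').
    by apply: le_trans ab _; rewrite h3 E.
  apply/negP => H; move: (le_trans H ba); rewrite h1 E //.
- case E: (q' <= q).
    by apply: le_trans ba _; rewrite h2 E.
  apply/negP => H; move: (le_trans H ab); rewrite h4 E //.
Qed.

Theorem lemma3p3 (dQ dP : Order.disp_t) (Q : finPOrderType dQ) (P : finPOrderType dP)
    (w : nat) (C : 'I_w -> {set P}) (f : Q -> 'I_w) :
  w = width P ->
  chain_partition C ->
  forall lin : rel P, linear_order lin -> compatible_lin C lin ->
    instance_closed_under (min_wrt lin) (lemma_instance C f).
Proof.
move=> _ _ lin Hlin Hcomp c; rewrite /lemma_instance => Hc.
case: (In_cat Hc) => Hc'; [have [q ->] := In_map Hc' | have [[q q'] ->] := In_map Hc'].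
- move=> t1 t2 /= H1 H2; rewrite tnth_mktuple.
  by case: (min_props Hlin Hcomp H1 H2) => [[-> _]|[-> _]].
- move=> t1 t2 /= /and4P [A1 A1' /eqP E1 /eqP F1] /and4P [A2 A2' /eqP E2 /eqP F2].
  rewrite !tnth_mktuple.
  set a := tnth t1 ord0 in A1 E1 F1 *; set a' := tnth t1 (lift ord0 ord0) in A1' E1 F1 *.
  set b := tnth t2 ord0 in A2 E2 F2 *; set b' := tnth t2 (lift ord0 ord0) in A2' E2 F2 *.
  case: (min_props Hlin Hcomp A1 A2) => [[-> ab]|[-> ba]];
  case: (min_props Hlin Hcomp A1' A2') => [[-> ab']|[-> ba']].
  + by rewrite A1 A1' E1 F1 !eqxx.
  + have [-> ->] := key E1 F1 E2 F2 ab ba'. by rewrite A1 A2' !eqxx.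
  + have [-> ->] := key E2 F2 E1 F1 ba ab'. by rewrite A2 A1' !eqxx.
  + by rewrite A2 A2' E2 F2 !eqxx.
Qed.
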